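(* Let $(A,M,\rho,[\cdot,\cdot]_A,\langle\cdot,\cdot\rangle_A)$ be a transitive Euclidean Lie algebroid, with $\mathcal{G}=\ker\rho$, splitting $\gamma$, induced metric $\langle\cdot,\cdot\rangle_{TM}$ (Levi-Civita connection $\nabla^M$, curvature $R^M$), and let $\nabla^\gamma,\Omega^\gamma,\nabla^A,T,H$ be as in the context. Then for all $X,Y,Z\in\Gamma(TM)$ and $U\in\Gamma(\mathcal{G})$: $R^{\nabla^A}(X,Y)Z^\gamma=\big\{(R^M(X,Y)Z)^\gamma+H_{Y^\gamma}H_{X^\gamma}Z^\gamma-H_{X^\gamma}H_{Y^\gamma}Z^\gamma\big\}+\big\{T_{H_{X^\gamma}Z^\gamma}Y^\gamma-T_{H_{Y^\gamma}Z^\gamma}X^\gamma-\tfrac12\nabla^{M,\gamma}_Z\Omega^\gamma(X,Y)\big\}$, $(R^{\nabla^A}(X,Y)U)^t=R^{\nabla^\gamma}(X,Y)U+H_{Y^\gamma}H_{X^\gamma}U-H_{X^\gamma}H_{Y^\gamma}U+T_U[X,Y]^\gamma-T_{\nabla^\gamma_YU}X^\gamma-\nabla^\gamma_X(T_UY^\gamma)-T_{T_UY^\gamma}X^\gamma+T_{\nabla^\gamma_XU}Y^\gamma+\nabla^\gamma_Y(T_UX^\gamma)+T_{T_UX^\gamma}Y^\gamma$, $\langle R^{\nabla^A}(X,Y)U,Z^\gamma\rangle_A=-\langle R^{\nabla^A}(X,Y)Z^\gamma,U\rangle_A$, where $\nabla^{M,\gamma}_Z\Omega^\gamma(X,Y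)=\nabla^\gamma_Z(\Omega^\gamma(X,Y))-\Omega^\gamma(X,\nabla^M_ZY)-\Omega^\gamma(\nabla^M_ZX,Y)$.
   Context: A transitive Lie algebroid is a vector bundle $\pi_A:A\to M$ with a Lie bracket $[\cdot,\cdot]_A$ on $\Gamma(A)$ and a surjective bundle map $\rho:A\to TM$ with $[a,fb]_A=f[a,b]_A+\rho(a)(f)b$; it is Euclidean if $A$ carries a fiberwise inner product $\langle\cdot,\cdot\rangle_A$. Let $\mathcal{G}=\ker\rho$, $\mathcal{G}^\perp$ its orthogonal, $a^t$ and $a^\perp$ the components of $a$ in $\mathcal{G}$ and $\mathcal{G}^\perp$, and $\gamma:TM\to\mathcal{G}^\perp$ the inverse of $\rho|_{\mathcal{G}^\perp}$; write $X^\gamma=\gamma(X)$. The metric on $M$ is $\langle X,Y\rangle_{TM}=\langle X^\gamma,Y^\gamma\rangle_A$. Define $\nabla^\gamma_XU=[X^\gamma,U]_A$ ($U\in\Gamma(\mathcal{G})$), a connection on $\mathcal{G}$, and $\Omega^\gamma(X,Y)=[X,Y]^\gamma-[X^\gamma,Y^\gamma]_A\in\Gamma(\mathcal{G})$. The Levi-Civita $A$-connection $\mathcal{D}$ is defined by $2\langle\mathcal{D}_ab,c\rangle_A=\rho(a)\langle b,c\rangle_A+\rho(b)\langle a,c\rangle_A-\rho(c)\langle a,b\rangle_A+\langle[c,a]_A,b\rangle_A+\langle[c,b]_A,a\rangle_A+\langle[a,b]_A,c\rangle_A$. Set $\nabla^A_Xa=\mathcal{D}_{X^\gamma}a$ (a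 connection on the vector bundle $A$) and define tensors $T_ab=(\mathcal{D}_{a^t}b^t)^\perp+(\mathcal{D}_{a^t}b^\perp)^t$, $H_ab=(\mathcal{D}_{a^\perp}b^t)^\perp+(\mathcal{D}_{a^\perp}b^\perp)^t$. All curvatures use the convention $R(X,Y)=\nabla_{[X,Y]}-\nabla_X\nabla_Y+\nabla_Y\nabla_X$. *)

(* Defs.v *)
(* Algebraic (Lie–Rinehart style) model of a transitive
   Euclidean Lie algebroid: F plays the role of C^oo(M), VT of Gamma(TM),
   VA of Gamma(A). *)
From HB Require Import structures.
From mathcomp Require Import all_boot all_order all_algebra.
Set Implicit Arguments. Unset Strict Implicit. Unset Printing Implicit Defensive.
Import GRing.Theory.
Local Open Scope ring_scope.

Section Defs.
Variable F : comUnitRingType.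

Definition is_vector_fields (VT : lmodType F)
    (act : VT -> F -> F) (brT : VT -> VT -> VT) : Prop :=
  [/\ forall X f g, act X (f + g) = act X f + act X g,
      forall X f g, act X (f * g) = act X f * g + f * act X g,
      forall f X Y h, act (f *: X + Y) h = f * act X h + act Y h,
      forall X Y, (forall h, act X h = act Y h) -> X = Y &
      forall X Y h, act (brT X Y) h = act X (act Y h) - act Y (act X h)].

Definition is_transitive_Lie_algebroid (VT VA : lmodType F)
    (act : VT -> F -> F) (brT : VT -> VT -> VT)
    (rho : VA -> VT) (brA : VA -> VA -> VA) : Prop :=
  (forall f a b, rho (f *: a + b) = f *: rho a + rho b) /\
  (forall Y, exists a, rho a = Y) /\
  (forall a b c, brA (a + b) c = brA a c + brA b c) /\
  (forall a b, brA a b = - brA b a) /\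
  (forall a b c, brA a (brA b c) + brA b (brA c a) + brA c (brA a b) = 0) /\
  (forall a f b, brA a (f *: b) = f *: brA a b + act (rho a) f *: b) /\
  (forall a b, rho (brA a b) = brT (rho a) (rho b)).

Definition is_fiber_metric (V : lmodType F) (g : V -> V -> F) : Prop :=
  [/\ forall f a b c, g (f *: a + b) c = f * g a c + g b c,
      forall a b, g a b = g b a &
      forall a, g a a = 0 -> a = 0].

(* pt a = a^t, the orthogonal projection onto G = ker rho. *)
Definition is_vertical_projection (VT VA : lmodType F)
    (rho : VA -> VT) (gA : VA -> VA -> F) (pt : VA -> VA) : Prop :=
  forall a, rho (pt a) = 0 /\ (forall u, rho u = 0 -> gA (a - pt a) u = 0).

Definition perp (VA : lmodType F) (pt : VA -> VA) (a : VA) : VA := a - pt a.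

Definition is_splitting (VT VA : lmodType F)
    (rho : VA -> VT) (gA : VA -> VA -> F) (gam : VT -> VA) : Prop :=
  forall X, rho (gam X) = X /\ (forall u, rho u = 0 -> gA (gam X) u = 0).

Definition gT (VT VA : lmodType F) (gA : VA -> VA -> F) (gam : VT -> VA)
  (X Y : VT) : F := gA (gam X) (gam Y).

(* Koszul formula defining a Levi-Civita (anc-)connection D. *)
Definition koszul (VT V : lmodType F) (act : VT -> F -> F) (anc : V -> VT)
    (br : V -> V -> V) (g : V -> V -> F) (D : V -> V -> V) : Prop :=
  forall a b c,
    2%:R * g (D a b) c =
      act (anc a) (g b c) + act (anc b) (g a c) - act (anc c) (g a b)
      + g (br c a) b + g (br c b) a + g (br a b) c.

(* Curvature, convention R(X,Y) = nab_[X,Y] - nab_X nab_Y + nab_Y nab_X. *)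
Definition curv (VT V : lmodType F) (brT : VT -> VT -> VT)
    (nab : VT -> V -> V) (X Y : VT) (s : V) : V :=
  nab (brT X Y) s - nab X (nab Y s) + nab Y (nab X s).

Definition nabA (VT VA : lmodType F) (D : VA -> VA -> VA) (gam : VT -> VA)
  (X : VT) (a : VA) : VA := D (gam X) a.

Definition nabg (VT VA : lmodType F) (brA : VA -> VA -> VA) (gam : VT -> VA)
  (X : VT) (U : VA) : VA := brA (gam X) U.

Definition Omega (VT VA : lmodType F) (brT : VT -> VT -> VT)
  (brA : VA -> VA -> VA) (gam : VT -> VA) (X Y : VT) : VA :=
  gam (brT X Y) - brA (gam X) (gam Y).

Definition Tt (VA : lmodType F) (D : VA -> VA -> VA) (pt : VA -> VA)
  (a b : VA) : VA :=
  perp pt (D (pt a) (pt b)) + pt (D (pt a) (perp pt b)).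

Definition Ht (VA : lmodType F) (D : VA -> VA -> VA) (pt : VA -> VA)
  (a b : VA) : VA :=
  perp pt (D (perp pt a) (pt b)) + pt (D (perp pt a) (perp pt b)).

Definition nabMOmega (VT VA : lmodType F) (brT : VT -> VT -> VT)
  (brA : VA -> VA -> VA) (gam : VT -> VA) (nablaM : VT -> VT -> VT)
  (Z X Y : VT) : VA :=
  nabg brA gam Z (Omega brT brA gam X Y)
  - Omega brT brA gam X (nablaM Z Y) - Omega brT brA gam (nablaM Z X) Y.

End Defs.

(* Main.v *)
Require Import Defs.
From HB Require Import structures.
From mathcomp Require Import all_boot all_order all_algebra.
From mathcomp Require Import ring.
Set Implicit Arguments. Unset Strict Implicit. Unset Printing Implicit Defensive.
Import GRing.Theory.
Local Open Scope ring_scope.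

Inductive zexp := ZAt of nat | ZAdd of zexp & zexp | ZOpp of zexp | ZZero.

Fixpoint zeval (V : zmodType) (env : seq V) (e : zexp) : V :=
  match e with
  | ZAt n => nth 0 env n
  | ZAdd a b => zeval env a + zeval env b
  | ZOpp a => - zeval env a
  | ZZero => 0
  end.

Fixpoint zcoef (i : nat) (e : zexp) : int :=
  match e with
  | ZAt n => if n == i then 1 else 0
  | ZAdd a b => zcoef i a + zcoef i b
  | ZOpp a => - zcoef i a
  | ZZero => 0
  end.

Fixpoint zmax (e : zexp) : nat :=
  match e with
  | ZAt n => n.+1
  | ZAdd a b => maxn (zmax a) (zmax b)
  | ZOpp a => zmax a
  | ZZero => 0
  end.

Definition zcheck e1 e2 :=
  all (fun i => zcoef i e1 == zcoef i e2) (iota 0 (maxn (zmax e1) (zmax e2))).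

Lemma zcoef_big (e : zexp) i : (zmax e <= i)%N -> zcoef i e = 0.
Proof.
elim: e => [n|a IHa b IHb|a IHa|] //=.
- by move=> h; case: eqP => // en; rewrite en ltnn in h.
- by rewrite geq_max => /andP[/IHa -> /IHb ->].
- by move/IHa => ->.
Qed.

Lemma zsum_at (V : zmodType) (env : seq V) m k : (m < k)%N ->
  \sum_(i < k) env`_i *~ (if m == i then 1 else 0) = env`_m.
Proof.
elim: k => // k IH; rewrite big_ord_recr /= ltnS leq_eqVlt => /orP[/eqP->|lt].
  rewrite eqxx big1 ?add0r // => i _; case: eqP => [e|]; last by rewrite mulr0z.
  by have := ltn_ord i; rewrite -e ltnn.
by rewrite IH // (ltn_eqF lt) mulr0z addr0.
Qed.

Lemma zeval_sum (V : zmodType) (env : seq V) e k : (zmax e <= k)%N ->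
  zeval env e = \sum_(i < k) env`_i *~ zcoef i e.
Proof.
elim: e => [n|a IHa b IHb|a IHa|] /=.
- by move=> h; rewrite zsum_at.
- rewrite geq_max => /andP[ha hb]; rewrite IHa // IHb // -big_split /=.
  by apply: eq_bigr => i _; rewrite mulrzDr.
- by move=> h; rewrite IHa // -sumrN; apply: eq_bigr => i _; rewrite mulrNz.
- by move=> _; rewrite big1 // => i _; rewrite mulr0z.
Qed.

Lemma zcheckP (V : zmodType) (env : seq V) e1 e2 :
  zcheck e1 e2 = true -> zeval env e1 = zeval env e2.
Proof.
rewrite /zcheck => /allP h.
set k := maxn (zmax e1) (zmax e2).
rewrite (@zeval_sum _ _ e1 k) ?leq_maxl // (@zeval_sum _ _ e2 k) ?leq_maxr //.
apply: eq_bigr => i _; congr (_ *~ _); apply/eqP/h.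
by rewrite mem_iota /= add0n ltn_ord.
Qed.

Ltac zconv x y := match constr:(tt) with
  | _ => let _ := constr:(@erefl _ x : x = y) in constr:(true)
  | _ => constr:(false) end.

Ltac zmem x l := lazymatch l with
  | ?y :: ?r => let b := zconv x y in
                lazymatch b with true => constr:(true) | false => zmem x r end
  | _ => constr:(false) end.

Ltac zcollect t l := lazymatch t with
  | ?a + ?b => let l1 := zcollect a l in zcollect b l1
  | - ?a => zcollect a l
  | 0 => l
  | _ => let b := zmem t l in
         lazymatch b with true => l | false => constr:(t :: l) end
  end.

Ltac zindex x l := lazymatch l with
  | ?y :: ?r => let b := zconv x y in
      lazymatch b with true => constr:(0%N)
      | false => let n := zindex x r in constr:(n.+1) end end.

Ltac zreify t l := lazymatch t with
  | ?a + ?b => let ea := zreify a l in let eb := zreify b l in constr:(ZAdd ea eb)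
  | - ?a => let ea := zreify a l in constr:(ZOpp ea)
  | 0 => constr:(ZZero)
  | _ => let n := zindex t l in constr:(ZAt n)
  end.

Ltac zmod_eq := lazymatch goal with |- @eq ?T ?l ?r =>
  let l0 := constr:(@nil T) in
  let l1 := zcollect l l0 in
  let env := zcollect r l1 in
  let el := zreify l env in
  let er := zreify r env in
  change (zeval env el = zeval env er); apply: zcheckP; vm_compute; reflexivity
end.


Lemma x2 (V : zmodType) (x : V) : x = x + x -> x = 0.
Proof. by move=> e; apply: (@addrI _ x); rewrite addr0 -e. Qed.

Lemma zlin1 (V : zmodType) (j l r : V) : j = 0 -> l - r = j -> l = r.
Proof. by move=> -> /eqP; rewrite subr_eq0 => /eqP. Qed.

Lemma zlin2 (V : zmodType) (j1 j2 l r : V) : j1 = 0 -> j2 = 0 -> l - r = j1 + j2 -> l = r.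
Proof. by move=> -> ->; rewrite addr0; apply: zlin1. Qed.

Section Main.
Variables (F : comUnitRingType) (VT VA : lmodType F)
    (act : VT -> F -> F) (brT : VT -> VT -> VT)
    (rho : VA -> VT) (brA : VA -> VA -> VA) (gA : VA -> VA -> F)
    (pt : VA -> VA) (gam : VT -> VA)
    (nablaM : VT -> VT -> VT) (D : VA -> VA -> VA).
Hypothesis h2 : (2%:R : F) \is a GRing.unit.
Hypothesis HVF : is_vector_fields act brT.
Hypothesis HLA : is_transitive_Lie_algebroid act brT rho brA.
Hypothesis HG : is_fiber_metric gA.
Hypothesis HP : is_vertical_projection rho gA pt.
Hypothesis HS : is_splitting rho gA gam.
Hypothesis KM : koszul act id brT (gT gA gam) nablaM.
Hypothesis KD : koszul act rho brA gA D.

Lemma actD X f g : act X (f + g) = act X f + act X g. Proof. by case: HVF. Qed.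
Lemma actM X f g : act X (f * g) = act X f * g + f * act X g. Proof. by case: HVF. Qed.
Lemma actL f X Y h : act (f *: X + Y) h = f * act X h + act Y h. Proof. by case: HVF. Qed.
Lemma actI X Y : (forall h, act X h = act Y h) -> X = Y.
Proof. by case: HVF => _ _ _ H _; apply: H. Qed.
Lemma actB X Y h : act (brT X Y) h = act X (act Y h) - act Y (act X h).
Proof. by case: HVF. Qed.

Lemma act0v X : act X 0 = 0. Proof. by apply: x2; rewrite -actD addr0. Qed.
Lemma actNf X f : act X (- f) = - act X f.
Proof. by apply: (@addrI _ (act X f)); rewrite -actD !subrr act0v. Qed.
Lemma actBf X f g : act X (f - g) = act X f - act X g.
Proof. by rewrite actD actNf. Qed.
Lemma act0X h : act 0 h = 0.
Proof. by apply: x2; have := actL 1 0 0 h; rewrite scaler0 addr0 mul1r. Qed.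
Lemma actDX X Y h : act (X + Y) h = act X h + act Y h.
Proof. by have := actL 1 X Y h; rewrite scale1r mul1r. Qed.
Lemma actNX X h : act (- X) h = - act X h.
Proof. by have := actL (-1) X 0 h; rewrite addr0 scaleN1r act0X addr0 mulN1r. Qed.
Lemma act1 X : act X 1 = 0.
Proof. by apply: x2; have := actM X 1 1; rewrite !mulr1 !mul1r. Qed.
Lemma act2 X : act X 2%:R = 0.
Proof. by rewrite mulr2n actD act1 addr0. Qed.
Lemma act2V X : act X (2%:R^-1) = 0.
Proof.
have := actM X 2%:R 2%:R^-1; rewrite divrr // act1 act2 mul0r add0r => /esym e.
by apply: (mulrI h2); rewrite e mulr0.
Qed.

Lemma brTN X Y : brT X Y = - brT Y X.
Proof. by apply: actI => h; rewrite actNX !actB opprB. Qed.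
Lemma brTDl X Y Z : brT (X + Y) Z = brT X Z + brT Y Z.
Proof. apply: actI => h; rewrite !(actB, actDX, actD); ring. Qed.
Lemma brTDr X Y Z : brT Z (X + Y) = brT Z X + brT Z Y.
Proof. by rewrite brTN brTDl opprD -!brTN. Qed.
Lemma brT0r X : brT X 0 = 0.
Proof. by apply: x2; rewrite -brTDr addr0. Qed.
Lemma brT0l X : brT 0 X = 0.
Proof. by rewrite brTN brT0r oppr0. Qed.
Lemma brTNr X Y : brT X (- Y) = - brT X Y.
Proof. by apply: (@addrI _ (brT X Y)); rewrite -brTDr !subrr brT0r. Qed.
Lemma brTJ X Y Z : brT X (brT Y Z) + brT Y (brT Z X) + brT Z (brT X Y) = 0.
Proof. apply: actI => h; rewrite !actDX !actB !actBf act0X; ring. Qed.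

Lemma rhoL f a b : rho (f *: a + b) = f *: rho a + rho b. Proof. by case: HLA. Qed.
Lemma brAD a b c : brA (a + b) c = brA a c + brA b c.
Proof. by case: HLA => _ [_ []]. Qed.
Lemma brAN a b : brA a b = - brA b a.
Proof. by case: HLA => _ [_ [_ []]]. Qed.
Lemma brAJ a b c : brA a (brA b c) + brA b (brA c a) + brA c (brA a b) = 0.
Proof. by case: HLA => _ [_ [_ [_ []]]]. Qed.
Lemma brAL a f b : brA a (f *: b) = f *: brA a b + act (rho a) f *: b.
Proof. by case: HLA => _ [_ [_ [_ [_ []]]]]. Qed.
Lemma rhoBr a b : rho (brA a b) = brT (rho a) (rho b).
Proof. by case: HLA => _ [_ [_ [_ [_ []]]]]. Qed.

Lemma rhoD a b : rho (a + b) = rho a + rho b.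
Proof. by have := rhoL 1 a b; rewrite !scale1r. Qed.
Lemma rho0 : rho 0 = 0. Proof. by apply: x2; rewrite -rhoD addr0. Qed.
Lemma rhoZ f a : rho (f *: a) = f *: rho a.
Proof. by have := rhoL f a 0; rewrite !addr0 rho0 addr0. Qed.
Lemma rhoN a : rho (- a) = - rho a.
Proof. by rewrite -scaleN1r rhoZ scaleN1r. Qed.

Lemma brADr a b c : brA a (b + c) = brA a b + brA a c.
Proof. by rewrite brAN brAD opprD -!brAN. Qed.
Lemma brA0r a : brA a 0 = 0. Proof. by apply: x2; rewrite -brADr addr0. Qed.
Lemma brANr a b : brA a (- b) = - brA a b.
Proof. by apply: (@addrI _ (brA a b)); rewrite -brADr !subrr brA0r. Qed.

Lemma gL f a b c : gA (f *: a + b) c = f * gA a c + gA b c. Proof. by case: HG. Qed.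
Lemma gC a b : gA a b = gA b a. Proof. by case: HG. Qed.
Lemma gdef a : gA a a = 0 -> a = 0. Proof. by case: HG => _ _; apply. Qed.
Lemma gDl a b c : gA (a + b) c = gA a c + gA b c.
Proof. by have := gL 1 a b c; rewrite scale1r mul1r. Qed.
Lemma g0l c : gA 0 c = 0. Proof. by apply: x2; rewrite -gDl addr0. Qed.
Lemma gZl f a c : gA (f *: a) c = f * gA a c.
Proof. by have := gL f a 0 c; rewrite addr0 g0l addr0. Qed.
Lemma gNl a c : gA (- a) c = - gA a c.
Proof. by rewrite -scaleN1r gZl mulN1r. Qed.
Lemma gDr a b c : gA c (a + b) = gA c a + gA c b.
Proof. by rewrite gC gDl !(gC c). Qed.
Lemma gNr a c : gA c (- a) = - gA c a.
Proof. by rewrite gC gNl gC. Qed.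
Lemma g0r c : gA c 0 = 0. Proof. by rewrite gC g0l. Qed.

Lemma gnd v w : (forall c, gA v c = gA w c) -> v = w.
Proof.
move=> H; apply/eqP; rewrite -subr_eq0; apply/eqP; apply: gdef.
by rewrite gDl gNl H subrr.
Qed.
Lemma gnd2 v w : (forall c, 2%:R * gA v c = 2%:R * gA w c) -> v = w.
Proof. by move=> H; apply: gnd => c; apply: (mulrI h2). Qed.

Lemma ptG0 a : rho (pt a) = 0. Proof. by case: (HP a). Qed.
Lemma ptO a u : rho u = 0 -> gA (a - pt a) u = 0. Proof. by case: (HP a) => _; apply. Qed.
Lemma gamR X : rho (gam X) = X. Proof. by case: (HS X). Qed.
Lemma gamO X u : rho u = 0 -> gA (gam X) u = 0. Proof. by case: (HS X) => _; apply. Qed.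

Lemma ptU a p : rho p = 0 -> (forall u, rho u = 0 -> gA (a - p) u = 0) -> pt a = p.
Proof.
move=> hp ho; apply/eqP; rewrite -subr_eq0; apply/eqP; apply: gdef.
have hr : rho (pt a - p) = 0 by rewrite rhoD rhoN ptG0 hp subrr.
have -> : pt a - p = (a - p) - (a - pt a) by zmod_eq.
by rewrite gDl gNl ho ?ptO ?subrr // -(_ : pt a - p = (a - p) - (a - pt a)) //; zmod_eq.
Qed.

Lemma ptD a b : pt (a + b) = pt a + pt b.
Proof.
apply: ptU => [|u hu]; first by rewrite rhoD !ptG0 addr0.
have -> : a + b - (pt a + pt b) = (a - pt a) + (b - pt b) by zmod_eq.
by rewrite gDl !ptO // addr0.
Qed.
Lemma pt0 : pt 0 = 0. Proof. by apply: x2; rewrite -ptD addr0. Qed.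
Lemma ptN a : pt (- a) = - pt a.
Proof. by apply: (@addrI _ (pt a)); rewrite -ptD !subrr pt0. Qed.
Lemma ptG a : rho a = 0 -> pt a = a.
Proof. by move=> ha; apply: ptU => // u _; rewrite subrr g0l. Qed.
Lemma pt_gam X : pt (gam X) = 0.
Proof. by apply: ptU => [|u hu]; rewrite ?rho0 // subr0 gamO. Qed.
Lemma pt_pt a : pt (pt a) = pt a. Proof. exact: ptG (ptG0 a). Qed.
Lemma pt_perp a : pt (a - pt a) = 0. Proof. by rewrite ptD ptN pt_pt subrr. Qed.

Lemma gamU X a : rho a = X -> (forall u, rho u = 0 -> gA a u = 0) -> gam X = a.
Proof.
move=> ha ho; apply/eqP; rewrite -subr_eq0; apply/eqP; apply: gdef.
have hr : rho (gam X - a) = 0 by rewrite rhoD rhoN gamR ha subrr.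
by rewrite gDl gNl gamO // ho // subrr.
Qed.
Lemma perp_gam a : a - pt a = gam (rho a).
Proof.
symmetry; apply: gamU => [|u hu]; first by rewrite rhoD rhoN ptG0 subr0.
exact: ptO.
Qed.
Lemma gamD X Y : gam (X + Y) = gam X + gam Y.
Proof.
apply: gamU => [|u hu]; first by rewrite rhoD !gamR.
by rewrite gDl !gamO // addr0.
Qed.
Lemma gam0 : gam 0 = 0. Proof. by apply: x2; rewrite -gamD addr0. Qed.
Lemma gamN X : gam (- X) = - gam X.
Proof. by apply: (@addrI _ (gam X)); rewrite -gamD !subrr gam0. Qed.

Lemma rhoOm X Y : rho (Omega brT brA gam X Y) = 0.
Proof. by rewrite /Omega rhoD rhoN rhoBr !gamR subrr. Qed.
Lemma rho_ng X U : rho U = 0 -> rho (nabg brA gam X U) = 0.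
Proof. by move=> hU; rewrite /nabg rhoBr gamR hU brT0r. Qed.
Lemma gOm X Y Z : gA (Omega brT brA gam X Y) (gam Z) = 0.
Proof. by rewrite gC gamO // rhoOm. Qed.
Lemma brA_gam X Y : brA (gam X) (gam Y) = gam (brT X Y) - Omega brT brA gam X Y.
Proof. by rewrite /Omega opprB addrC subrK. Qed.

Lemma KDe a b c : 2%:R * gA (D a b) c =
      act (rho a) (gA b c) + act (rho b) (gA a c) - act (rho c) (gA a b)
      + gA (brA c a) b + gA (brA c b) a + gA (brA a b) c.
Proof. exact: KD. Qed.
Lemma KMe X Y Z : 2%:R * gA (gam (nablaM X Y)) (gam Z) =
      act X (gA (gam Y) (gam Z)) + act Y (gA (gam X) (gam Z))
      - act Z (gA (gam X) (gam Y))
      + gA (gam (brT Z X)) (gam Y) + gA (gam (brT Z Y)) (gam X)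
      + gA (gam (brT X Y)) (gam Z).
Proof. exact: KM. Qed.

Lemma DDr a b c : D a (b + c) = D a b + D a c.
Proof.
apply: gnd2 => e; rewrite gDl mulrDr !KDe.
rewrite !(rhoD, gDl, gDr, actD, actDX, brADr); ring.
Qed.
Lemma D0r a : D a 0 = 0. Proof. by apply: x2; rewrite -DDr addr0. Qed.

Lemma Dmet a b c : act (rho a) (gA b c) = gA (D a b) c + gA (D a c) b.
Proof.
apply: (mulrI h2); rewrite mulrDr !KDe.
rewrite (gC c b) (brAN b a) (brAN b c) (brAN a c) !gNl; ring.
Qed.

Lemma Dtor a b : D a b - D b a = brA a b.
Proof.
apply: gnd2 => c; rewrite gDl gNl mulrDr mulrN !KDe.
rewrite (gC b a) (brAN b a) gNl; ring.
Qed.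

Lemma gTnd V W : (forall Z, 2%:R * gA (gam V) (gam Z) = 2%:R * gA (gam W) (gam Z)) -> V = W.
Proof.
move=> H; have e : gam V = gam W.
  apply: gnd2 => c; rewrite -(subrK (pt c) c) perp_gam !gDr !(gamO _ (ptG0 c)) !addr0.
  exact: H.
by rewrite -(gamR V) e gamR.
Qed.

Lemma MTor X Y : nablaM X Y - nablaM Y X = brT X Y.
Proof.
apply: gTnd => Z; rewrite gamD gamN gDl gNl mulrDr mulrN !KMe.
rewrite (gC (gam Y) (gam X)) (brTN Y X) gamN gNl; ring.
Qed.
Lemma MT' X Y : nablaM X Y = nablaM Y X + brT X Y.
Proof. by rewrite -MTor addrC subrK. Qed.

Lemma rhoDgg X Z : rho (D (gam X) (gam Z)) = nablaM X Z.
Proof.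
apply: gTnd => W; rewrite KMe -perp_gam gDl gNl (gC (pt _) (gam W)).
rewrite (gamO _ (ptG0 _)) subr0 KDe !gamR !brA_gam !gDl !gNl !gOm !subr0.
ring.
Qed.

Lemma Hgg X Z : pt (D (gam X) (gam Z)) = - (2%:R^-1) *: Omega brT brA gam X Z.
Proof.
apply: ptU => [|u hu]; first by rewrite rhoZ rhoOm scaler0.
have e : 2%:R * gA (D (gam X) (gam Z)) u = - gA (Omega brT brA gam X Z) u.
  rewrite KDe (gamO Z hu) (gamO X hu) !act0v hu act0X.
  have hb V : rho (brA u (gam V)) = 0 by rewrite rhoBr hu brT0l.
  rewrite (gC (brA u (gam X))) (gamO _ (hb X)) (gC (brA u (gam Z))) (gamO _ (hb Z)).
  by rewrite brA_gam gDl gNl (gamO _ hu); ring.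
have e2 : gA (D (gam X) (gam Z)) u = 2%:R^-1 * (2%:R * gA (D (gam X) (gam Z)) u).
  by rewrite mulKr.
by rewrite gDl gNl gZl e2 e; ring.
Qed.

Lemma Hxz X Z : Ht D pt (gam X) (gam Z) = pt (D (gam X) (gam Z)).
Proof. by rewrite /Ht /perp !pt_gam !subr0 D0r pt0 subr0 add0r. Qed.

Lemma Dgg X Z : D (gam X) (gam Z) = gam (nablaM X Z) + Ht D pt (gam X) (gam Z).
Proof. by rewrite Hxz -rhoDgg -perp_gam subrK. Qed.

Lemma TUx U X : rho U = 0 -> Tt D pt U (gam X) = pt (D U (gam X)).
Proof. by move=> hU; rewrite /Tt /perp (ptG hU) !pt_gam D0r pt0 !subr0 add0r. Qed.

Lemma HxU X U : rho U = 0 -> Ht D pt (gam X) U = D (gam X) U - pt (D (gam X) U).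
Proof. by move=> hU; rewrite /Ht /perp (ptG hU) !pt_gam subr0 subrr D0r pt0 addr0. Qed.

Lemma Hxb X b : pt b = 0 -> Ht D pt (gam X) b = pt (D (gam X) b).
Proof. by move=> hb; rewrite /Ht /perp hb pt_gam !subr0 D0r pt0 subr0 add0r. Qed.

Lemma DgU X U : rho U = 0 ->
  D (gam X) U = nabg brA gam X U + Tt D pt U (gam X) + Ht D pt (gam X) U.
Proof.
move=> hU; rewrite (TUx X hU) (HxU X hU) /nabg.
have e : D (gam X) U = D U (gam X) + brA (gam X) U by rewrite -Dtor addrC subrK.
have hb : rho (brA (gam X) U) = 0 by rewrite rhoBr hU brT0r.
have ep : pt (D (gam X) U) = brA (gam X) U + pt (D U (gam X)).
  by rewrite e ptD (ptG hb) addrC.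
rewrite ep. zmod_eq.
Qed.

Lemma pt3 a b c : pt (a + b + c) = pt a + pt b + pt c.
Proof. by rewrite !ptD. Qed.
Lemma ptc a b1 b2 b3 c1 c2 c3 :
  pt (a - (b1 + b2 + b3) + (c1 + c2 + c3)) =
  pt a - (pt b1 + pt b2 + pt b3) + (pt c1 + pt c2 + pt c3).
Proof. by rewrite !(ptD, ptN). Qed.
Lemma D3 a b c d : D a (b + c + d) = D a b + D a c + D a d.
Proof. by rewrite !DDr. Qed.

Lemma rho_T U X : rho U = 0 -> rho (Tt D pt U (gam X)) = 0.
Proof. by move=> hU; rewrite (TUx X hU) ptG0. Qed.
Lemma pt_H X U : rho U = 0 -> pt (Ht D pt (gam X) U) = 0.
Proof. by move=> hU; rewrite (HxU X hU) pt_perp. Qed.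
Lemma rho_Hgg X Z : rho (Ht D pt (gam X) (gam Z)) = 0.
Proof. by rewrite Hxz ptG0. Qed.

Lemma ptDgU X U : rho U = 0 ->
  pt (D (gam X) U) = nabg brA gam X U + Tt D pt U (gam X).
Proof.
move=> hU; rewrite (DgU X hU) pt3 (ptG (rho_ng X hU)) (pt_H X hU) addr0.
by rewrite (TUx X hU) pt_pt.
Qed.

Lemma claim2 X Y U : rho U = 0 ->
  pt (curv brT (nabA D gam) X Y U) =
        curv brT (nabg brA gam) X Y U + Ht D pt (gam Y) (Ht D pt (gam X) U)
        - Ht D pt (gam X) (Ht D pt (gam Y) U)
        + Tt D pt U (gam (brT X Y)) - Tt D pt (nabg brA gam Y U) (gam X)
        - nabg brA gam X (Tt D pt U (gam Y))
        - Tt D pt (Tt D pt U (gam Y)) (gam X) + Tt D pt (nabg brA gam X U) (gam Y)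
        + nabg brA gam Y (Tt D pt U (gam X))
        + Tt D pt (Tt D pt U (gam X)) (gam Y).
Proof.
move=> hU; rewrite /curv /nabA (DgU Y hU) (DgU X hU) (D3 (gam X) (nabg brA gam Y U)) (D3 (gam Y) (nabg brA gam X U)) ptc.
rewrite (ptDgU _ hU) (ptDgU X (rho_ng Y hU)) (ptDgU Y (rho_ng X hU)).
rewrite (ptDgU X (rho_T Y hU)) (ptDgU Y (rho_T X hU)).
rewrite -(Hxb X (pt_H Y hU)) -(Hxb Y (pt_H X hU)) /curv.
zmod_eq.
Qed.

Lemma skewR X Y a b :
  gA (curv brT (nabA D gam) X Y a) b = - gA (curv brT (nabA D gam) X Y b) a.
Proof.
have metX V c d : act V (gA c d) = gA (D (gam V) c) d + gA (D (gam V) d) c.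
  by rewrite -{1}(gamR V) Dmet.
have metS V c d : gA (D (gam V) c) d = act V (gA c d) - gA (D (gam V) d) c.
  by rewrite metX addrK.
rewrite /curv /nabA !gDl !gNl.
rewrite (metS _ (D (gam Y) a) b) (metS _ (D (gam X) a) b).
rewrite (metS _ (D (gam Y) b) a) (metS _ (D (gam X) b) a).
rewrite (metS (brT X Y) a b) actB (metX Y a b) (metX X a b) !actD.
rewrite (gC (D (gam X) b) (D (gam Y) a)) (gC (D (gam Y) b) (D (gam X) a)).
rewrite (gC (D (gam X) a) (D (gam Y) b)) (gC (D (gam Y) a) (D (gam X) b)).
ring.
Qed.

Lemma ngZh X V : nabg brA gam X (- (2%:R^-1) *: V) = - (2%:R^-1) *: nabg brA gam X V.
Proof. by rewrite /nabg brAL actNf act2V oppr0 scale0r addr0. Qed.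

Lemma scal5 (a : F) (v1 v2 v3 v4 v5 : VA) :
  a *: (v1 - v2 - v3 + v4 + v5) = a *: v1 - a *: v2 - a *: v3 + a *: v4 + a *: v5.
Proof. by rewrite !scalerDr !scalerN. Qed.

Lemma keyO X Y Z :
  Omega brT brA gam (brT X Y) Z - Omega brT brA gam X (nablaM Y Z)
  - nabg brA gam X (Omega brT brA gam Y Z) + Omega brT brA gam Y (nablaM X Z)
  + nabg brA gam Y (Omega brT brA gam X Z) = nabMOmega brT brA gam nablaM Z X Y.
Proof.
have e := brTJ X Y Z.
rewrite (brTN Z X) brTNr (brTN Z (brT X Y)) in e.
have eT0 : brT (brT X Y) Z - brT X (brT Y Z) + brT Y (brT X Z) = 0.
  by rewrite -oppr0 -e; zmod_eq.
have eT : gam (brT (brT X Y) Z) - gam (brT X (brT Y Z)) + gam (brT Y (brT X Z)) = 0.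
  by rewrite -!gamN -!gamD eT0 gam0.
have eA := brAJ (gam X) (gam Y) (gam Z).
rewrite (brAN (gam Z) (gam X)) brANr in eA.
rewrite /nabMOmega /Omega /nabg (MT' Y Z) (MT' X Z).
rewrite !(brTDr, gamD, gamN, brADr, brANr).
rewrite (brTN (nablaM Z X) Y) gamN (brAN (gam (nablaM Z X)) (gam Y)).
rewrite (brAN (gam (brT X Y)) (gam Z)).
apply: (zlin2 eT eA); zmod_eq.
Qed.

Lemma claim1 X Y Z :
  curv brT (nabA D gam) X Y (gam Z) =
        (gam (curv brT nablaM X Y Z) + Ht D pt (gam Y) (Ht D pt (gam X) (gam Z))
           - Ht D pt (gam X) (Ht D pt (gam Y) (gam Z)))
      + (Tt D pt (Ht D pt (gam X) (gam Z)) (gam Y)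
           - Tt D pt (Ht D pt (gam Y) (gam Z)) (gam X)
           - (2%:R)^-1 *: nabMOmega brT brA gam nablaM Z X Y).
Proof.
rewrite /curv /nabA (Dgg Y Z) (Dgg X Z).
rewrite (DDr (gam X) (gam (nablaM Y Z))) (DDr (gam Y) (gam (nablaM X Z))).
rewrite (Dgg (brT X Y) Z) (Dgg X (nablaM Y Z)) (Dgg Y (nablaM X Z)).
rewrite (DgU X (rho_Hgg Y Z)) (DgU Y (rho_Hgg X Z)).
rewrite !Hxz !Hgg !ngZh -keyO.
rewrite !gamD !gamN.
rewrite -scaleNr scal5.
zmod_eq.
Qed.
End Main.

Theorem proposition3p2 (F : comUnitRingType) (VT VA : lmodType F)
    (act : VT -> F -> F) (brT : VT -> VT -> VT)
    (rho : VA -> VT) (brA : VA -> VA -> VA) (gA : VA -> VA -> F)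
    (pt : VA -> VA) (gam : VT -> VA)
    (nablaM : VT -> VT -> VT) (D : VA -> VA -> VA) :
  (2%:R : F) \is a GRing.unit ->
  is_vector_fields act brT ->
  is_transitive_Lie_algebroid act brT rho brA ->
  is_fiber_metric gA ->
  is_vertical_projection rho gA pt ->
  is_splitting rho gA gam ->
  koszul act id brT (gT gA gam) nablaM ->
  koszul act rho brA gA D ->
  forall (X Y Z : VT) (U : VA), rho U = 0 ->
  let RA := curv brT (nabA D gam) in
  let Rg := curv brT (nabg brA gam) in
  let RM := curv brT nablaM in
  let ng := nabg brA gam in
  let T := Tt D pt in
  let H := Ht D pt in
  [/\ RA X Y (gam Z) =
        (gam (RM X Y Z) + H (gam Y) (H (gam X) (gam Z))
           - H (gam X) (H (gam Y) (gam Z)))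
      + (T (H (gam X) (gam Z)) (gam Y) - T (H (gam Y) (gam Z)) (gam X)
           - (2%:R)^-1 *: nabMOmega brT brA gam nablaM Z X Y),
      pt (RA X Y U) =
        Rg X Y U + H (gam Y) (H (gam X) U) - H (gam X) (H (gam Y) U)
        + T U (gam (brT X Y)) - T (ng Y U) (gam X) - ng X (T U (gam Y))
        - T (T U (gam Y)) (gam X) + T (ng X U) (gam Y) + ng Y (T U (gam X))
        + T (T U (gam X)) (gam Y) &
      gA (RA X Y U) (gam Z) = - gA (RA X Y (gam Z)) U].
Proof.
move=> h2 HVF HLA HG HP HS KM KD X Y Z U hU; cbv zeta.
split.
- exact: (claim1 h2 HVF HLA HG HP HS KM KD X Y Z).
- exact: (claim2 h2 HVF HLA HG HP HS KD X Y hU).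
- exact: (skewR h2 HVF HLA HG HS KD X Y U (gam Z)).
Qed.
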